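(* Let $\kappa$ be an infinite cardinal and suppose $HC(\kappa)$ holds, i.e. every end of degree $\kappa$ of every graph has a ray graph. Then every end of degree $\kappa$ of every graph has property $HC^*(\kappa)$. In particular, if an end $\varepsilon$ of degree $\kappa$ contains a $\kappa$-star of rays, then $\varepsilon$ has property $HC^*(\kappa)$.
   Context: Rays, ends, degree of an end as usual (the degree of $\varepsilon$ is the supremum of sizes of families of disjoint rays in $\varepsilon$). A family of paths is independent if the paths meet only in endpoints. For a family $\mathcal R$ of rays, an $\mathcal R$-family of paths is a family of paths whose endpoints lie on rays of $\mathcal R$; it is $\mathcal R$-internally disjoint if no path meets any ray of $\mathcal R$ except at its endpoints. For pairwise disjoint equivalent rays $\mathcal R$ and an independent $\mathcal R$-internally disjoint $\mathcal R$-family $\mathcal P$, the ray graph of $(\mathcal R,\mathcal P)$ has vertex set $\mathcal R$, with $r,s$ adjacent iff infinitely many paths of $\mathcal P$ join $r$ and $s$. A ray graph for an end $\varepsilon$ is a connected such ray graph with $\mathcal R\subseteq\varepsilon$ and $|\mathcal R|=\deg(\varepsilon)$. An end $\varepsilon$ of degree $\kappa$ has property $HC^*(\kappa)$ if there is a family $\mathcal R\subseteq\varepsilon$ of $\kappa$ pairwise disjoint rays and an $\mathcal R$-internally disjoint $\mathcal R$-family of paths $\mathcal P$ such that for every countable $\mathcal R'\subseteq\mathcal R$ there are a countable $\mathcal R''$ with $\mathcal R'\subseteq\mathcal R''\subseteq\mathcal R$ and a countable family $\mathcal P''\subseteq\mathcal P$ of independent $\mathcal R''$-paths such that the ray graph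 of $(\mathcal R'',\mathcal P'')$ is connected. A $\kappa$-star of rays consists of a central ray and $\kappa$ further rays, all pairwise disjoint, each sending an infinite family of disjoint paths to the central ray, with paths from distinct families meeting only on the central ray. *)

(* Defs.v *)
From Stdlib Require Import List Relations.
Import ListNotations.
Set Implicit Arguments.

Section Graphs.
Variable V : Type.
Variable adj : V -> V -> Prop.

Definition simple_graph : Prop :=
  (forall x y, adj x y -> adj y x) /\ (forall x, ~ adj x x).

Fixpoint chain (p : list V) : Prop :=
  match p with
  | x :: ((y :: _) as t) => adj x y /\ chain t
  | _ => True
  end.

Definition is_path (p : list V) : Prop := p <> [] /\ NoDup p /\ chain p.

Definition first_vx (p : list V) (v : V) : Prop := hd_error p = Some v.
Definition last_vx (p : list V) (v : V) : Prop := hd_error (rev p) = Some v.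
Definition is_endpoint (p : list V) (v : V) : Prop := first_vx p v \/ last_vx p v.

Definition is_ray (r : nat -> V) : Prop :=
  (forall n m, r n = r m -> n = m) /\ (forall n, adj (r n) (r (S n))).

Definition on_ray (r : nat -> V) (v : V) : Prop := exists n, r n = v.

(** r and s are equivalent: for every finite vertex set S, tails of r and s
    lie in the same component of G - S *)
Definition equiv_rays (r s : nat -> V) : Prop :=
  forall S : list V, exists n m (p : list V),
    (forall k, n <= k -> ~ In (r k) S) /\
    (forall k, m <= k -> ~ In (s k) S) /\
    is_path p /\ first_vx p (r n) /\ last_vx p (s m) /\
    (forall v, In v p -> ~ In v S).

Definition is_end (eps : (nat -> V) -> Prop) : Prop :=
  (exists r, eps r) /\ (forall r, eps r -> is_ray r) /\
  (forall r s, eps r -> is_ray s -> (eps s <-> equiv_rays r s)).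

Definition disjoint_rays (R : (nat -> V) -> Prop) : Prop :=
  (forall r, R r -> is_ray r) /\
  (forall r s, R r -> R s -> r <> s -> forall n m, r n <> s m).

Definition equivalent_rays (R : (nat -> V) -> Prop) : Prop :=
  forall r s, R r -> R s -> equiv_rays r s.

Definition R_family (R : (nat -> V) -> Prop) (P : list V -> Prop) : Prop :=
  forall p, P p -> is_path p /\
    (exists r v, R r /\ on_ray r v /\ first_vx p v) /\
    (exists r v, R r /\ on_ray r v /\ last_vx p v).

Definition R_internally_disjoint (R : (nat -> V) -> Prop) (P : list V -> Prop) : Prop :=
  forall p r v, P p -> R r -> In v p -> on_ray r v -> is_endpoint p v.

Definition independent (P : list V -> Prop) : Prop :=
  forall p q v, P p -> P q -> p <> q -> In v p -> In v q ->
    is_endpoint p v /\ is_endpoint q v.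

Definition joins (p : list V) (r s : nat -> V) : Prop :=
  (exists a b, on_ray r a /\ on_ray s b /\ first_vx p a /\ last_vx p b) \/
  (exists a b, on_ray s a /\ on_ray r b /\ first_vx p a /\ last_vx p b).

Definition infinite_paths (Q : list V -> Prop) : Prop :=
  forall l : list (list V), exists p, Q p /\ ~ In p l.

Definition ray_graph_adj (R : (nat -> V) -> Prop) (P : list V -> Prop)
  (r s : nat -> V) : Prop :=
  R r /\ R s /\ r <> s /\ infinite_paths (fun p => P p /\ joins p r s).

Definition ray_graph_data (R : (nat -> V) -> Prop) (P : list V -> Prop) : Prop :=
  disjoint_rays R /\ equivalent_rays R /\ R_family R P /\
  R_internally_disjoint R P /\ independent P.

Definition ray_graph_connected (R : (nat -> V) -> Prop) (P : list V -> Prop) : Prop :=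
  forall r s, R r -> R s -> clos_refl_trans _ (ray_graph_adj R P) r s.

End Graphs.

Definition card_le (A B : Type) : Prop := exists f : A -> B, forall x y, f x = f y -> x = y.
Definition card_lt (A B : Type) : Prop := card_le A B /\ ~ card_le B A.
Definition card_eq (A B : Type) : Prop :=
  exists f : A -> B, (forall x y, f x = f y -> x = y) /\ (forall y, exists x, f x = y).
Definition infinite_card (K : Type) : Prop := card_le nat K.
Definition countable (A : Type) : Prop := card_le A nat.

(** deg(eps) = |K| : |K| is the supremum of the sizes of families of
    disjoint rays in eps *)
Definition end_degree (V : Type) (adj : V -> V -> Prop)
  (eps : (nat -> V) -> Prop) (K : Type) : Prop :=
  (forall R : (nat -> V) -> Prop, (forall r, R r -> eps r) -> disjoint_rays adj R ->
     card_le {r | R r} K) /\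
  (forall L : Type, card_lt L K ->
     exists R : (nat -> V) -> Prop, (forall r, R r -> eps r) /\ disjoint_rays adj R /\
       ~ card_le {r | R r} L).

Definition has_ray_graph (V : Type) (adj : V -> V -> Prop)
  (eps : (nat -> V) -> Prop) (K : Type) : Prop :=
  exists (R : (nat -> V) -> Prop) (P : list V -> Prop),
    (forall r, R r -> eps r) /\ card_eq {r | R r} K /\
    ray_graph_data adj R P /\ ray_graph_connected R P.

Definition HC (K : Type) : Prop :=
  forall (V : Type) (adj : V -> V -> Prop), simple_graph adj ->
    forall eps, is_end adj eps -> end_degree adj eps K -> has_ray_graph adj eps K.

Definition HCstar (V : Type) (adj : V -> V -> Prop)
  (eps : (nat -> V) -> Prop) (K : Type) : Prop :=
  exists (R : (nat -> V) -> Prop) (P : list V -> Prop),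
    (forall r, R r -> eps r) /\ disjoint_rays adj R /\ card_eq {r | R r} K /\
    R_family adj R P /\ R_internally_disjoint R P /\
    forall R' : (nat -> V) -> Prop, (forall r, R' r -> R r) -> countable {r | R' r} ->
      exists R'' : (nat -> V) -> Prop,
        (forall r, R' r -> R'' r) /\ (forall r, R'' r -> R r) /\ countable {r | R'' r} /\
        exists P'' : list V -> Prop,
          (forall p, P'' p -> P p) /\ countable {p | P'' p} /\
          independent P'' /\ R_family adj R'' P'' /\
          ray_graph_connected R'' P''.

Definition ray_ray_path (V : Type) (adj : V -> V -> Prop) (p : list V) (r c : nat -> V) : Prop :=
  is_path adj p /\
  (exists a, on_ray r a /\ first_vx p a) /\ (exists b, on_ray c b /\ last_vx p b) /\
  (forall v, In v p -> on_ray r v -> first_vx p v) /\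
  (forall v, In v p -> on_ray c v -> last_vx p v).

Definition contains_star (V : Type) (adj : V -> V -> Prop)
  (eps : (nat -> V) -> Prop) (K : Type) : Prop :=
  exists (c : nat -> V) (R : (nat -> V) -> Prop) (Q : (nat -> V) -> list V -> Prop),
    eps c /\ (forall r, R r -> eps r) /\ ~ R c /\ card_eq {r | R r} K /\
    disjoint_rays adj (fun r => r = c \/ R r) /\
    (forall r, R r ->
       infinite_paths (Q r) /\
       (forall p, Q r p -> ray_ray_path adj p r c) /\
       (forall p q v, Q r p -> Q r q -> p <> q -> In v p -> ~ In v q)) /\
    (forall r s p q v, R r -> R s -> r <> s -> Q r p -> Q s q ->
       In v p -> In v q -> on_ray c v).

(* Main.v *)
Require Import Defs.
From Stdlib Require Import List Relations Classical ClassicalEpsilon ProofIrrelevance Cantor Lia FinFun.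
Import ListNotations.
Set Implicit Arguments.

Lemma to_nat_inj (a b : nat * nat) : to_nat a = to_nat b -> a = b.
Proof. intro H. rewrite <- (cancel_of_to a), <- (cancel_of_to b), H. reflexivity. Qed.

Lemma inj_avoid (A : Type) (g : nat -> A) :
  (forall n m, g n = g m -> n = m) -> forall l : list A, exists n, ~ In (g n) l.
Proof.
  intros Hg l. apply NNPP; intro Hc.
  assert (Hall : forall n, In (g n) l).
  { intro n. apply NNPP; intro Hn. apply Hc. exists n; exact Hn. }
  assert (Hnd : NoDup (map g (seq 0 (S (length l))))).
  { apply FinFun.Injective_map_NoDup. intros x y; apply Hg. apply seq_NoDup. }
  assert (Hinc : incl (map g (seq 0 (S (length l)))) l).
  { intros a Ha. apply in_map_iff in Ha. destruct Ha as [x [<- _]]. apply Hall. }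
  pose proof (NoDup_incl_length Hnd Hinc) as Hle.
  rewrite length_map, length_seq in Hle. lia.
Qed.

Lemma inf_seq (A : Type) (Q : A -> Prop) :
  (forall l : list A, exists p, Q p /\ ~ In p l) ->
  exists g : nat -> A, (forall n m, g n = g m -> n = m) /\ forall n, Q (g n).
Proof.
  intro H.
  set (h := fun l => proj1_sig (constructive_indefinite_description _ (H l))).
  assert (Hh : forall l, Q (h l) /\ ~ In (h l) l).
  { intro l. unfold h. destruct (constructive_indefinite_description _ (H l)); auto. }
  set (L := fix L n := match n with 0 => [] | S n => h (L n) :: L n end).
  exists (fun n => h (L n)). split.
  - assert (Hin : forall m n, m < n -> In (h (L m)) (L n)).
    { intros m n; induction n; intro Hmn; [lia|].
      simpl. destruct (PeanoNat.Nat.eq_dec m n) as [->|Hne]; [left; reflexivity|].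
      right; apply IHn; lia. }
    intros n m E. destruct (PeanoNat.Nat.lt_trichotomy n m) as [Hl|[Hl|Hl]]; auto.
    + exfalso. apply (proj2 (Hh (L m))). rewrite <- E. apply Hin; auto.
    + exfalso. apply (proj2 (Hh (L n))). rewrite E. apply Hin; auto.
  - intro n; apply Hh.
Qed.

Section Aux.
Variable V : Type.
Variable Rel : (nat -> V) -> (nat -> V) -> Prop.

Fixpoint walk (a : nat -> V) (l : list (nat -> V)) (b : nat -> V) : Prop :=
  match l with
  | [] => a = b
  | y :: t => Rel a y /\ walk y t b
  end.

Lemma rt_walk a b : clos_refl_trans _ Rel a b -> exists l, walk a l b.
Proof.
  intro H. apply clos_rt_rt1n in H. induction H.
  - exists []; reflexivity.
  - destruct IHclos_refl_trans_1n as [l Hl]. exists (y :: l); simpl; auto.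
Qed.

Lemma walk_end a l b : walk a l b -> a = b \/ In b l.
Proof.
  revert a; induction l as [|y t IH]; simpl; intros a H; auto.
  destruct H as [_ H]. destruct (IH _ H) as [->|Hi]; auto.
Qed.

Lemma walk_rt (Rel2 : _ -> _ -> Prop) (S : (nat -> V) -> Prop) :
  (forall x y, S x -> S y -> Rel x y -> Rel2 x y) ->
  forall l a b, walk a l b -> S a -> (forall x, In x l -> S x) ->
  forall x, In x l -> clos_refl_trans _ Rel2 a x.
Proof.
  intros HS l; induction l as [|y t IH]; simpl; intros a b Hw Ha Hl x Hx; [contradiction|].
  destruct Hw as [Hay Hw].
  assert (Hay2 : clos_refl_trans _ Rel2 a y) by (apply rt_step; apply HS; auto).
  destruct Hx as [<-|Hx]; auto.
  eapply rt_trans; [exact Hay2|]. eapply IH; eauto.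
Qed.
End Aux.

Lemma rt_sym (A : Type) (Rl : A -> A -> Prop) :
  (forall x y, Rl x y -> Rl y x) -> forall x y, clos_refl_trans _ Rl x y -> clos_refl_trans _ Rl y x.
Proof.
  intros Hs x y H; induction H.
  - apply rt_step; auto.
  - apply rt_refl.
  - eapply rt_trans; eauto.
Qed.

Lemma rga_sym (V : Type) R P (x y : nat -> V) : ray_graph_adj R P x y -> ray_graph_adj R P y x.
Proof.
  intros [Hx [Hy [Hne Hi]]]. repeat split; auto.
  intro l. destruct (Hi l) as [p [[HP Hj] Hn]]. exists p; repeat split; auto.
  unfold joins in *; tauto.
Qed.

Lemma main_part (K : Type) (V : Type) (adj : V -> V -> Prop) eps :
  has_ray_graph adj eps K -> HCstar adj eps K.
Proof.
  intros [R [P [Heps [Hcard [[Hdis [Heq [Hfam [Hint Hind]]]] Hcon]]]]].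
  exists R, P. split; [auto|split; [auto|split; [auto|split; [auto|split; [auto|]]]]].
  intros R' HR' [f' Hf'].
  destruct (classic (exists r0, R' r0)) as [[r0 Hr0]|Hno].
  2:{ exists R'. split; [auto|]. split; [auto|]. split; [exists f'; auto|].
      exists (fun _ => False). split; [intros; contradiction|]. split.
      { exists (fun s => False_rect nat (proj2_sig s)). intros [? []]. }
      split; [intros p q v Hp; contradiction|]. split; [intros p Hp; contradiction|].
      intros r s Hr; exfalso; apply Hno; eauto. }
  assert (HW : forall r', exists l, R' r' -> walk (ray_graph_adj R P) r0 l r').
  { intro r'. destruct (classic (R' r')) as [Hr|Hr].
    - destruct (rt_walk (Hcon r0 r' (HR' _ Hr0) (HR' _ Hr))) as [l Hl]. exists l; auto.
    - exists []; intro; contradiction. }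
  set (W := fun r' => proj1_sig (constructive_indefinite_description _ (HW r'))).
  assert (HWs : forall r', R' r' -> walk (ray_graph_adj R P) r0 (W r') r').
  { intros r' Hr. unfold W. destruct (constructive_indefinite_description _ (HW r')); auto. }
  assert (HG : forall x y, exists g : nat -> list V, ray_graph_adj R P x y ->
     (forall n m, g n = g m -> n = m) /\ forall n, P (g n) /\ joins (g n) x y).
  { intros x y. destruct (classic (ray_graph_adj R P x y)) as [Ha|Ha].
    - destruct (@inf_seq _ _ (proj2 (proj2 (proj2 Ha)))) as [g Hg]. exists g; intros _.
      exact Hg.
    - exists (fun _ => []); intro; contradiction. }
  set (G := fun x y => proj1_sig (constructive_indefinite_description _ (HG x y))).
  assert (HGs : forall x y, ray_graph_adj R P x y ->
     (forall n m, G x y n = G x y m -> n = m) /\ forall n, P (G x y n) /\ joins (G x y n) x y).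
  { intros x y. unfold G. destruct (constructive_indefinite_description _ (HG x y)); auto. }
  set (R'' := fun x => exists r', R' r' /\ In x (r0 :: W r')).
  set (P'' := fun p => exists x y n, R'' x /\ R'' y /\ ray_graph_adj R P x y /\ p = G x y n).
  assert (HwR : forall l a b, walk (ray_graph_adj R P) a l b -> forall x, In x l -> R x).
  { induction l as [|y t IH]; simpl; intros a b Hw x Hx; [contradiction|].
    destruct Hw as [[_ [Hy _]] Hw]. destruct Hx as [<-|Hx]; eauto. }
  assert (HR''R : forall x, R'' x -> R x).
  { intros x [r' [Hr [<-|Hx]]]; [apply HR'; auto| eapply HwR; eauto]. }
  assert (HR'R'' : forall r, R' r -> R'' r).
  { intros r Hr. exists r; split; auto.
    destruct (@walk_end _ _ _ _ _ (HWs r Hr)) as [->|Hi]; [left; auto|right; auto]. }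
  assert (Hc1 : forall s : {x | R'' x}, exists t : {r | R' r} * nat,
     nth_error (r0 :: W (proj1_sig (fst t))) (snd t) = Some (proj1_sig s)).
  { intros [x [r' [Hr Hx]]]. simpl. destruct (In_nth_error _ _ Hx) as [n Hn].
    exists (exist _ r' Hr, n). exact Hn. }
  set (c1 := fun s => let t := proj1_sig (constructive_indefinite_description _ (Hc1 s)) in
              to_nat (f' (fst t), snd t)).
  assert (Hc1i : forall s1 s2, c1 s1 = c1 s2 -> s1 = s2).
  { intros s1 s2. unfold c1.
    destruct (constructive_indefinite_description _ (Hc1 s1)) as [[a1 n1] E1].
    destruct (constructive_indefinite_description _ (Hc1 s2)) as [[a2 n2] E2].
    cbn [fst snd proj1_sig] in *. intro E. apply to_nat_inj in E. injection E as Ea En.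
    apply Hf' in Ea. subst. rewrite E1 in E2. injection E2 as E2.
    destruct s1, s2; simpl in *; subst. f_equal; apply proof_irrelevance. }
  exists R''. split; [auto|]. split; [auto|]. split; [exists c1; exact Hc1i|].
  exists P''.
  assert (HP''P : forall p, P'' p -> P p).
  { intros p [x [y [n [_ [_ [Ha ->]]]]]]. apply (HGs x y Ha). }
  split; [auto|]. split.
  {
    assert (Hc2 : forall s : {p | P'' p}, exists t : {x | R'' x} * {x | R'' x} * nat,
       proj1_sig s = G (proj1_sig (fst (fst t))) (proj1_sig (snd (fst t))) (snd t)).
    { intros [p Hp0]. cbn [proj1_sig]. destruct Hp0 as [x [y [n [Hx [Hy [_ Hp]]]]]]. exists (exist _ x Hx, exist _ y Hy, n). exact Hp. }
    exists (fun s => let t := proj1_sig (constructive_indefinite_description _ (Hc2 s)) in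
              to_nat (c1 (fst (fst t)), to_nat (c1 (snd (fst t)), snd t))).
    intros s1 s2.
    destruct (constructive_indefinite_description _ (Hc2 s1)) as [[[a1 b1] n1] E1].
    destruct (constructive_indefinite_description _ (Hc2 s2)) as [[[a2 b2] n2] E2].
    cbn [fst snd proj1_sig] in *. intro E. apply to_nat_inj in E.
    assert (Ea := f_equal fst E). assert (E' := f_equal snd E). cbn [fst snd] in Ea, E'.
    apply to_nat_inj in E'. injection E' as Eb En.
    apply Hc1i in Ea. apply Hc1i in Eb. subst.
    destruct s1, s2; simpl in *; subst. f_equal; apply proof_irrelevance. }
  split.
  { intros p q v Hp Hq; apply Hind; auto. }
  split.
  { intros p [x [y [n [Hx [Hy [Ha ->]]]]]].
    destruct (HGs x y Ha) as [_ Hn]. destruct (Hn n) as [HPn Hj].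
    split; [apply (Hfam _ HPn)|].
    destruct Hj as [[a [b [Ha' [Hb [Hf Hl]]]]]|[a [b [Ha' [Hb [Hf Hl]]]]]].
    - split; [exists x, a | exists y, b]; auto.
    - split; [exists y, a | exists x, b]; auto. }
  assert (Hlift : forall x y, R'' x -> R'' y -> ray_graph_adj R P x y -> ray_graph_adj R'' P'' x y).
  { intros x y Hx Hy Ha. pose proof Ha as [_ [_ [Hne _]]]. repeat split; auto.
    intro l. destruct (HGs x y Ha) as [Hinj Hn].
    destruct (@inj_avoid _ _ Hinj l) as [n Hnl]. exists (G x y n). repeat split; auto.
    - exists x, y, n; auto.
    - apply Hn. }
  assert (Hr0'' : R'' r0) by (apply HR'R''; auto).
  assert (Hto : forall x, R'' x -> clos_refl_trans _ (ray_graph_adj R'' P'') r0 x).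
  { intros x [r' [Hr [<-|Hx]]]; [apply rt_refl|].
    eapply (@walk_rt _ (ray_graph_adj R P) (ray_graph_adj R'' P'') R'' Hlift); eauto.
    intros z Hz. exists r'; split; auto; right; auto. }
  intros r s Hr Hs. eapply rt_trans; [apply rt_sym; [apply rga_sym|apply Hto; auto]|apply Hto; auto].
Qed.

Theorem mainTheorem6 (K : Type) :
  infinite_card K -> HC K ->
  (forall (V : Type) (adj : V -> V -> Prop), simple_graph adj ->
     forall eps, is_end adj eps -> end_degree adj eps K -> HCstar adj eps K) /\
  (forall (V : Type) (adj : V -> V -> Prop), simple_graph adj ->
     forall eps, is_end adj eps -> end_degree adj eps K -> contains_star adj eps K ->
       HCstar adj eps K).
Proof.
  intros _ HHC. split.
  - intros V adj Hs eps He Hd. apply main_part. apply HHC; auto.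
  - intros V adj Hs eps He Hd _. apply main_part. apply HHC; auto.
Qed.
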